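(* Let $m>2\left(\left(2C+\tfrac14\right)^{1/4}+\sqrt2\right)^2$ be an integer and $n=\lceil\log_2(m-3)\rceil$. Then the $m$-gonal form $$P_m(x_1)+2P_m(x_2)+4P_m(x_3)+\cdots+2^{n}P_m(x_{n+1})$$ is universal.
   Context: For an integer $m\ge 3$ and $x\in\mathbb Z$ put $P_m(x)=\frac{m-2}{2}x^2-\frac{m-4}{2}x$. An $m$-gonal form $\sum_i a_iP_m(x_i)$ (positive integer coefficients, integer variables) is universal if for every positive integer $N$ there are integers $x_i$ with $\sum_i a_iP_m(x_i)=N$. Standing assumption: $C$ is a fixed absolute constant such that for every $m\ge3$, every $m$-gonal form that represents every positive integer in $[1,C(m-2)]$ is universal. *)

(* Defs.v *)
From Stdlib Require Import ZArith Reals List.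
Open Scope Z_scope.

(* P_m(x) = ((m-2)/2) x^2 - ((m-4)/2) x ; the numerator is always even. *)
Definition Pm (m x : Z) : Z := ((m - 2) * x ^ 2 - (m - 4) * x) / 2.

Definition form_value (m : Z) (a xs : list Z) : Z :=
  fold_right Z.add 0 (map (fun p => fst p * Pm m (snd p)) (combine a xs)).

Definition represents (m : Z) (a : list Z) (N : Z) : Prop :=
  exists xs : list Z, length xs = length a /\ form_value m a xs = N.

Definition universal (m : Z) (a : list Z) : Prop :=
  forall N : Z, 0 < N -> represents m a N.

Definition C_property (C : R) : Prop :=
  forall (m : Z) (a : list Z), 3 <= m -> Forall (fun c => 0 < c) a ->
    (forall N : Z, 1 <= N -> (IZR N <= C * IZR (m - 2))%R -> represents m a N) ->
    universal m a.

Definition pow2_coeffs (n : nat) : list Z :=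
  map (fun i => 2 ^ Z.of_nat i) (seq 0 (S n)).

(* Main.v *)
Require Import Defs.
From Stdlib Require Import ZArith Reals List Lia Lra Psatz Bool.
Open Scope bool_scope.
Open Scope Z_scope.

Definition T (y:Z) : Z := y*(y+1)/2.

Lemma T2 : forall y, 2 * T y = y*(y+1).
Proof. intro y. unfold T. destruct (Z.Even_or_Odd y) as [[k Hk]|[k Hk]]; subst.
 - replace (2*k*(2*k+1)) with ((k*(2*k+1))*2) by ring. rewrite Z.div_mul by lia. ring.
 - replace ((2*k+1)*(2*k+1+1)) with (((2*k+1)*(k+1))*2) by ring. rewrite Z.div_mul by lia. ring.
Qed.

Lemma Tneg : forall y, T (-y-1) = T y.
Proof. intro y. unfold T. f_equal. ring. Qed.

Lemma Pm_eq : forall m x, Pm m x = (m-2)*T(x-1) + x.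
Proof. intros. unfold Pm. pose proof (T2 (x-1)). rewrite Z.pow_2_r.
 replace ((m-2)*(x*x) - (m-4)*x) with (((m-2)*T(x-1)+x)*2) by nia.
 rewrite Z.div_mul; lia. Qed.

Fixpoint Fv (m:Z) (xs:list Z) : Z := match xs with nil => 0 | x::r => Pm m x + Fv m r * 2 end.

Lemma form_value_pow : forall m xs s,
  form_value m (map (fun i => 2 ^ Z.of_nat i) (seq s (length xs))) xs = 2^(Z.of_nat s) * Fv m xs.
Proof. intros m xs. induction xs as [|x r IH]; intros s.
 - unfold form_value; simpl. rewrite Z.mul_0_r. reflexivity.
 - unfold form_value in *. simpl. rewrite IH. rewrite Nat2Z.inj_succ, Z.pow_succ_r by lia. ring.
Qed.

Fixpoint lin (xs:list Z) := match xs with nil => 0 | x::r => x + lin r * 2 end.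
Fixpoint tri (xs:list Z) := match xs with nil => 0 | x::r => T (x-1) + tri r * 2 end.
Fixpoint Ysum (ys:list Z) := match ys with nil => 0 | y::r => y + Ysum r * 2 end.
Fixpoint Tsum (ys:list Z) := match ys with nil => 0 | y::r => T y + Tsum r * 2 end.

Lemma Fv_eq : forall m xs, Fv m xs = (m-2)*tri xs + lin xs.
Proof. intros m xs; induction xs as [|x r IH]; simpl; [ring|]. rewrite Pm_eq, IH. ring. Qed.

Lemma signs : forall ys, Forall (fun y => 0 <= y) ys -> forall V,
  Ysum ys <= V <= 2^(Z.of_nat (length ys)) - 1 - Ysum ys ->
  exists xs, length xs = length ys /\ lin xs = V /\ tri xs = Tsum ys.
Proof. induction ys as [|y r IH]; intros HF V HV.
 - exists nil. simpl in *. split; [reflexivity|]. split; lia.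
 - inversion HF; subst. simpl length in HV. rewrite Nat2Z.inj_succ, Z.pow_succ_r in HV by lia.
   simpl Ysum in HV. set (P := 2 ^ Z.of_nat (length r)) in *.
   destruct (Z.Even_or_Odd (V - y - 1)) as [[w Hw]|[w Hw]].
   + destruct (IH H2 w) as [xs [Hl1 [Hl3 Hl4]]]. lia.
     exists ((y+1)::xs). simpl. split; [lia|]. split; [lia|]. rewrite Hl4. f_equal. f_equal. f_equal. ring.
   + destruct (IH H2 (w+y+1)) as [xs [Hl1 [Hl3 Hl4]]]. lia.
     exists ((-y)::xs). simpl. split; [lia|]. split; [lia|]. rewrite Hl4.
     replace (-y-1) with (-y-1) by ring. rewrite Tneg. reflexivity.
Qed.

Fixpoint bits (n:nat) (k:Z) : list Z := match n with O => nil | S n' => (k mod 2) :: bits n' (k/2) end.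

Lemma bits_spec : forall n k, 0 <= k < 2^(Z.of_nat n) ->
  length (bits n k) = n /\ Tsum (bits n k) = k /\ Ysum (bits n k) = k /\ Forall (fun y => 0 <= y) (bits n k).
Proof. induction n as [|n IH]; intros k Hk.
 - simpl in *. repeat split; auto; lia.
 - rewrite Nat2Z.inj_succ, Z.pow_succ_r in Hk by lia.
   pose proof (Z.div_mod k 2 ltac:(lia)) as Hd. pose proof (Z.mod_pos_bound k 2 ltac:(lia)) as Hm.
   destruct (IH (k/2)) as [A [B [C D]]]. lia.
   simpl. rewrite A, B, C. 
   assert (Tb : T (k mod 2) = k mod 2). { assert (k mod 2 = 0 \/ k mod 2 = 1) as [E|E] by lia; rewrite E; reflexivity. }
   rewrite Tb. repeat split; try lia. constructor; [lia|exact D].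
Qed.

Lemma good_sound : forall m n q B y0 z1 z2 k2 x0 V,
  (2 <= n)%nat -> 0 <= y0 -> 0 <= z1 -> 0 <= z2 -> 0 <= k2 ->
  4*k2 < 2^(Z.of_nat n) ->
  (x0 = y0 + 1 \/ x0 = - y0) ->
  T y0 + 2*(T z1 + 2*T z2 + 4*k2) = q ->
  B - x0 = 2*V ->
  z1 + 2*z2 + 4*k2 <= V <= 2^(Z.of_nat n) - 1 - (z1 + 2*z2 + 4*k2) ->
  represents m (pow2_coeffs n) ((m-2)*q + B).
Proof.
  intros m n q B y0 z1 z2 k2 x0 V Hn H0 H1 H2 H3 Hk Hx Hq HB HV.
  assert (Hpn : 2^(Z.of_nat n) = 4 * 2^(Z.of_nat (n-2))).
  { replace (Z.of_nat n) with (Z.of_nat (n-2) + 2) by lia. rewrite Z.pow_add_r by lia. change (2^2) with 4. ring. }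
  assert (Hpos : 0 < 2^(Z.of_nat (n-2))) by (apply Z.pow_pos_nonneg; lia).
  destruct (bits_spec (n-2) k2) as [Bl [BT [BY BF]]]. lia.
  set (ys := z1 :: z2 :: bits (n-2) k2).
  assert (Hlen : length ys = n) by (unfold ys; simpl; lia).
  assert (HF : Forall (fun y => 0 <= y) ys) by (unfold ys; repeat constructor; auto).
  destruct (signs ys HF V) as [xs [Hl [Hlin Htri]]].
  { rewrite Hlen. unfold ys; simpl. rewrite BY. lia. }
  exists (x0 :: xs). split.
  - unfold pow2_coeffs. rewrite length_map, length_seq. simpl. lia.
  - unfold pow2_coeffs. replace (S n) with (length (x0::xs)) by (simpl; lia).
    rewrite form_value_pow. simpl Fv. rewrite Fv_eq, Htri, Hlin, Pm_eq.
    unfold ys; simpl Tsum. rewrite BT.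
    assert (Tx : T (x0 - 1) = T y0).
    { destruct Hx as [E|E]; subst x0. f_equal; ring. replace (-y0-1) with (-y0-1) by ring. apply Tneg. }
    rewrite Tx. simpl (2 ^ Z.of_nat 0). subst q. 
    replace B with (x0 + 2*V) by lia. ring.
Qed.

Definition amaxf (q:Z) : Z := (Z.sqrt (8*q+1) - 1)/2.

Lemma amaxf_spec : forall q, 0 <= q -> 0 <= amaxf q /\ T (amaxf q) <= q < T (amaxf q + 1).
Proof.
  intros q Hq. unfold amaxf. set (s := Z.sqrt (8*q+1)).
  destruct (Z.sqrt_spec (8*q+1) ltac:(lia)) as [Hs1 Hs2]. fold s in Hs1, Hs2.
  assert (Hs0 : 0 <= s) by (apply Z.sqrt_nonneg).
  assert (Hs : 1 <= s) by nia.
  pose proof (Z.div_mod (s-1) 2 ltac:(lia)) as Hd. pose proof (Z.mod_pos_bound (s-1) 2 ltac:(lia)) as Hm.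
  set (a := (s-1)/2) in *. set (e := (s-1) mod 2) in *. pose proof (T2 a). pose proof (T2 (a+1)).
  assert (0 <= a) by lia. split; [lia|].
  assert (s = 2*a+1+e) by lia. subst s.
  split.
  - assert ((2*a+1)*(2*a+1) <= 8*q+1) by nia. nia.
  - assert (8*q+1 < (2*a+3)*(2*a+3)) by nia. nia.
Qed.
Lemma T_mono : forall x y, 0 <= x <= y -> T x <= T y.
Proof. intros. pose proof (T2 x). pose proof (T2 y). nia. Qed.

Lemma zlemma : forall k, 0 <= k -> exists z k1, 0 <= z /\ 0 <= k1 /\ k = T z + 2*k1 /\ z*z <= 2*k /\ 2*k1 <= 3*z+5.
Proof.
  intros k Hk. destruct (amaxf_spec k Hk) as [Hb [Hb1 Hb2]]. set (b := amaxf k) in *.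
  pose proof (T2 b) as Tb. pose proof (T2 (b+1)) as Tb1. pose proof (T2 (b-1)) as Tbm1. pose proof (T2 (b-2)) as Tbm2.
  assert (E1 : T (b+1) = T b + b + 1) by lia.
  assert (E2 : T (b-1) = T b - b) by lia.
  assert (E3 : T (b-2) = T b - 2*b + 1) by lia.
  assert (Hbb : b*b <= 2*k) by nia.
  clear Tb Tb1 Tbm1 Tbm2.
  destruct (Z.Even_or_Odd (k - T b)) as [[w Hw]|[w Hw]].
  - exists b, w. repeat split; nia.
  - destruct (Z.Even_or_Odd b) as [[c Hc]|[c Hc]].
    + assert (1 <= b) by lia.
      exists (b-2), (w + b). repeat split; nia.
    + exists (b-1), (w + c + 1). repeat split; nia.
Qed.

Definition rep := (Z*Z*Z*Z*bool)%type.
Definition rx0 (r:rep) : Z := let '(y0,_,_,_,ng) := r in if ng then -y0 else y0+1.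
Definition rY (r:rep) : Z := let '(_,z1,z2,k2,_) := r in z1 + 2*z2 + 4*k2.
Definition rk2 (r:rep) : Z := let '(_,_,_,k2,_) := r in k2.
Definition rvalid (q:Z) (r:rep) : bool := let '(y0,z1,z2,k2,_) := r in
  (0 <=? y0) && (0 <=? z1) && (0 <=? z2) && (0 <=? k2) && (T y0 + 2*(T z1 + 2*T z2 + 4*k2) =? q).
Definition rL r := 2*rY r + rx0 r.
Definition rU r := 2*rY r - rx0 r + 5.
Definition Mf (a:Z) : Z := Z.max 20 (2*a + 6 + Z.sqrt (32*a+16)).
Definition zrange (c:Z) (k:nat) : list Z := map (fun i => c - Z.of_nat i) (seq 0 k).
Definition gz (k:Z) : Z*Z := let b := amaxf k in
  if Z.even (k - T b) then (b, (k - T b)/2) else if Z.even (k - T (b-1)) then (b-1, (k - T (b-1))/2) else (b-2, (k - T (b-2))/2).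
Definition cands (q:Z) : list rep :=
  flat_map (fun y0 => let k := (q - T y0)/2 in let '(z1,k1) := gz k in let '(z2,k2) := gz k1 in
     (y0,z1,z2,k2,true)::(y0,z1,z2,k2,false)::nil) (zrange (amaxf q) 4).
Fixpoint best (f:rep->Z) (l:list rep) : option rep :=
  match l with nil => None | x::r => match best f r with None => Some x | Some y => if f x <=? f y then Some x else Some y end end.
Definition dcond q M p r := rvalid q r && (rx0 r mod 2 =? p) && (rU r <=? M) && (4*rk2 r + 3 <? M).
Definition scond q M p r := rvalid q r && (rx0 r mod 2 =? p) && (rL r <=? M-2) && (4*rk2 r + 3 <? M).
Definition okq (q:Z) : bool := let M := Mf (amaxf q) in let cq := cands q in let cq1 := cands (q-1) in
  forallb (fun p => match best rL (filter (dcond q M p) cq) with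
     | None => false
     | Some d => (rL d <=? 0) || match best rU (filter (scond (q-1) M 0) cq1), best rU (filter (scond (q-1) M 1) cq1) with
          | Some s0, Some s1 => (rL d + rU s0 <=? M) && (rL d + rU s1 <=? M) | _,_ => false end end) (0::1::nil).
Fixpoint allokZ (k:nat) (q:Z) : bool := match k with O => true | S k' => okq q && allokZ k' (q+1) end.

Lemma allok_true : allokZ 299 1 = true. Proof. vm_compute. reflexivity. Qed.

Lemma best_in : forall f l x, best f l = Some x -> In x l.
Proof. intros f l; induction l as [|a r IH]; intros x H; simpl in H; [discriminate|].
  destruct (best f r) as [y|] eqn:E.
  - destruct (f a <=? f y); inversion H; subst; [left; auto | right; auto].
  - inversion H; subst; left; auto. Qed.

Lemma rep_sound : forall m n q B r, rvalid q r = true -> (2 <= n)%nat -> 4 * rk2 r < 2^(Z.of_nat n) ->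
  rx0 r mod 2 = B mod 2 -> 2*rY r <= B - rx0 r <= 2*2^(Z.of_nat n) - 2 - 2*rY r ->
  represents m (pow2_coeffs n) ((m-2)*q + B).
Proof.
  intros m n q B [[[[y0 z1] z2] k2] ng] Hv Hn Hk Hp HB.
  unfold rvalid, rx0, rY, rk2 in *. repeat rewrite andb_true_iff in Hv.
  destruct Hv as [[[[H0 H1] H2] H3] H4]. apply Z.leb_le in H0, H1, H2, H3. apply Z.eqb_eq in H4.
  set (x0 := if ng then -y0 else y0+1) in *.
  pose proof (Z.div_mod B 2 ltac:(lia)). pose proof (Z.div_mod x0 2 ltac:(lia)).
  apply (good_sound m n q B y0 z1 z2 k2 x0 (B/2 - x0/2)); try lia.
  unfold x0; destruct ng; lia.
Qed.

Lemma okq_sound : forall q m n B, okq q = true -> Mf (amaxf q) <= m -> 0 <= B <= m - 3 ->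
  (2 <= n)%nat -> m - 3 <= 2^(Z.of_nat n) -> represents m (pow2_coeffs n) ((m-2)*q + B).
Proof.
  intros q m n B Hok HM HB Hn Hpn.
  assert (HM20 : 20 <= Mf (amaxf q)) by (unfold Mf; lia).
  unfold okq in Hok. rewrite forallb_forall in Hok.
  specialize (Hok (B mod 2)). 
  assert (Hpm : 0 <= B mod 2 < 2) by (apply Z.mod_pos_bound; lia).
  set (M := Mf (amaxf q)) in *.
  assert (In (B mod 2) (0::1::nil)) by (simpl; lia).
  specialize (Hok H). clear H.
  destruct (best rL (filter (dcond q M (B mod 2)) (cands q))) as [d|] eqn:Ed; [|discriminate].
  apply best_in in Ed. apply filter_In in Ed. destruct Ed as [_ Hd].
  unfold dcond in Hd. repeat rewrite andb_true_iff in Hd. destruct Hd as [[[Hd1 Hd2] Hd3] Hd4].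
  apply Z.eqb_eq in Hd2. apply Z.leb_le in Hd3. apply Z.ltb_lt in Hd4.
  unfold rU in Hd3.
  destruct (Z_le_gt_dec (2*rY d + rx0 d) B) as [Hge|Hlt].
  - apply (rep_sound m n q B d); try lia; assumption.
  - apply orb_true_iff in Hok. destruct Hok as [Hok|Hok]; [apply Z.leb_le in Hok; unfold rL in Hok; lia|].
    set (p' := (B + m - 2) mod 2).
    assert (Hp' : 0 <= p' < 2) by (apply Z.mod_pos_bound; lia).
    destruct (best rU (filter (scond (q-1) M 0) (cands (q-1)))) as [s0|] eqn:E0; [|discriminate].
    destruct (best rU (filter (scond (q-1) M 1) (cands (q-1)))) as [s1|] eqn:E1; [|discriminate].
    apply andb_true_iff in Hok. destruct Hok as [Hk0 Hk1]. apply Z.leb_le in Hk0, Hk1. unfold rL, rU in Hk0, Hk1.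
    replace ((m-2)*q + B) with ((m-2)*(q-1) + (B + m - 2)) by ring.
    assert (Hs : exists s, rvalid (q-1) s = true /\ rx0 s mod 2 = p' /\ 2*rY s + rx0 s <= M - 2 /\
                           4 * rk2 s + 3 < M /\ 2*rY d + rx0 d + (2*rY s - rx0 s + 5) <= M).
    { assert (p' = 0 \/ p' = 1) as [Ep|Ep] by lia.
      - exists s0. apply best_in in E0. apply filter_In in E0. destruct E0 as [_ Hs].
        unfold scond, rL in Hs. repeat rewrite andb_true_iff in Hs. destruct Hs as [[[Hs1 Hs2] Hs3] Hs4].
        apply Z.eqb_eq in Hs2. apply Z.leb_le in Hs3. apply Z.ltb_lt in Hs4. repeat split; auto; lia.
      - exists s1. apply best_in in E1. apply filter_In in E1. destruct E1 as [_ Hs].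
        unfold scond, rL in Hs. repeat rewrite andb_true_iff in Hs. destruct Hs as [[[Hs1 Hs2] Hs3] Hs4].
        apply Z.eqb_eq in Hs2. apply Z.leb_le in Hs3. apply Z.ltb_lt in Hs4. repeat split; auto; lia. }
    destruct Hs as [s [Hs1 [Hs2 [Hs3 [Hs4 Hs5]]]]].
    apply (rep_sound m n (q-1) (B + m - 2) s); try lia; try assumption.
    all: unfold p' in Hs2; lia.
Qed.

Definition goodb (m:Z) (n:nat) (q B:Z) (r:rep) : bool := rvalid q r && (rx0 r mod 2 =? B mod 2) && (2*rY r <=? B - rx0 r)
  && (B - rx0 r <=? 2*2^(Z.of_nat n) - 2 - 2*rY r) && (4*rk2 r <? 2^(Z.of_nat n)) && Nat.leb 2 n.
Definition nOf (m:Z) : nat := Z.to_nat (Z.log2_up (m-3)).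
Definition Hb m a := (0 <? m-2*a-5) && (16*(2*a+1) <? (m-2*a-5)*(m-2*a-5)).
Definition sm_ok m N := let n := nOf m in let q := N/(m-2) in let B := N mod (m-2) in
  negb (Hb m (amaxf q)) || existsb (goodb m n q B) (cands q) || existsb (goodb m n (q-1) (B+m-2)) (cands (q-1)).
Fixpoint smallN (k:nat) (N:Z) (m:Z) : bool := match k with O => true | S k' => sm_ok m N && smallN k' (N+1) m end.
Fixpoint smallM (k:nat) (m:Z) : bool := match k with O => true | S k' => smallN 200 1 m && smallM k' (m+1) end.
Lemma smallM_true : smallM 10 10 = true. Proof. vm_compute. reflexivity. Qed.

Lemma smallN_spec : forall k N m, smallN k N m = true -> forall N', N <= N' < N + Z.of_nat k -> sm_ok m N' = true.
Proof. induction k as [|k IH]; intros N m H N' HN; simpl in *. lia.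
  apply andb_true_iff in H. destruct H as [H1 H2].
  destruct (Z.eq_dec N N') as [E|E]. subst; auto. apply (IH (N+1) m H2). lia. Qed.

Lemma smallM_spec : forall k m, smallM k m = true -> forall m', m <= m' < m + Z.of_nat k -> smallN 200 1 m' = true.
Proof. induction k as [|k IH]; intros m H m' Hm; simpl in *. lia.
  apply andb_true_iff in H. destruct H as [H1 H2].
  destruct (Z.eq_dec m m') as [E|E]. subst; auto. apply (IH (m+1) H2). lia. Qed.

Lemma goodb_sound : forall m n q B r, goodb m n q B r = true -> represents m (pow2_coeffs n) ((m-2)*q + B).
Proof. intros m n q B r H. unfold goodb in H. repeat rewrite andb_true_iff in H.
  destruct H as [[[[[H1 H2] H3] H4] H5] H6]. apply Z.eqb_eq in H2. apply Z.leb_le in H3, H4. apply Z.ltb_lt in H5.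
  apply Nat.leb_le in H6. apply (rep_sound m n q B r); auto. Qed.

Lemma small_sound : forall m N, 10 <= m <= 19 -> 1 <= N <= 200 -> Hb m (amaxf (N/(m-2))) = true ->
  represents m (pow2_coeffs (nOf m)) N.
Proof. intros m N Hm HN HH.
  pose proof (smallM_spec 10 10 smallM_true m ltac:(lia)) as H1.
  pose proof (smallN_spec 200 1 m H1 N ltac:(lia)) as H2.
  unfold sm_ok in H2. rewrite HH in H2. simpl negb in H2. rewrite orb_false_l in H2.
  pose proof (Z.div_mod N (m-2) ltac:(lia)) as Hd.
  apply orb_true_iff in H2. destruct H2 as [H2|H2]; apply existsb_exists in H2; destruct H2 as [r [_ Hr]];
  apply goodb_sound in Hr.
  - rewrite Hd. exact Hr.
  - replace N with ((m-2)*(N/(m-2)-1) + (N mod (m-2) + m - 2)) by lia. exact Hr.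
Qed.

Lemma allokZ_spec : forall k q0, allokZ k q0 = true -> forall q, q0 <= q < q0 + Z.of_nat k -> okq q = true.
Proof. induction k as [|k IH]; intros q0 H q Hq; simpl in *. lia.
  apply andb_true_iff in H. destruct H as [H1 H2].
  destruct (Z.eq_dec q0 q) as [E|E]. subst; auto. apply (IH (q0+1) H2). lia. Qed.

Lemma Mf_le : forall m a, 20 <= m -> 0 <= a -> 0 < m-2*a-5 -> 16*(2*a+1) < (m-2*a-5)*(m-2*a-5) -> Mf a <= m.
Proof. intros m a H1 H2 H3 H4. unfold Mf. apply Z.max_lub; [lia|].
  destruct (Z.sqrt_spec (32*a+16) ltac:(lia)) as [Hs1 Hs2].
  set (s := Z.sqrt (32*a+16)) in *. assert (0 <= s) by apply Z.sqrt_nonneg.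
  destruct (Z_le_gt_dec (m-2*a-5) s); [|lia]. nia. Qed.

Lemma realH : forall C m a N,
  (IZR m > 2 * (sqrt (sqrt (2 * C + 1 / 4)) + sqrt 2) ^ 2)%R -> 0 <= a -> 5 <= m ->
  (m-2)*T a <= N -> (IZR N <= C * IZR (m - 2))%R ->
  0 < m-2*a-5 /\ 16*(2*a+1) < (m-2*a-5)*(m-2*a-5).
Proof.
  intros C m a N hm Ha Hm HN HNC.
  pose proof (T2 a) as HT2.
  assert (Tnn : 0 <= T a) by nia.
  assert (hT : (IZR (T a) <= C)%R).
  { assert (E : (IZR ((m-2)*T a) <= IZR N)%R) by (apply IZR_le; lia). rewrite mult_IZR in E.
    assert (P : (0 < IZR (m-2))%R) by (apply IZR_lt; lia). nra. }
  assert (h2 : (2 * IZR (T a) = IZR a * (IZR a + 1))%R).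
  { apply (f_equal IZR) in HT2. rewrite !mult_IZR, plus_IZR in HT2. exact HT2. }
  assert (hA : (0 <= IZR a)%R) by (apply IZR_le; lia).
  set (c := (2 * C + 1/4)%R) in *.
  assert (hc : ((IZR a + 1/2) * (IZR a + 1/2) <= c)%R) by (unfold c; nra).
  assert (hc0 : (0 <= c)%R) by nra.
  set (u := sqrt c) in *. assert (hu : (u * u = c)%R) by (apply sqrt_sqrt; lra).
  assert (hu0 : (0 <= u)%R) by apply sqrt_pos.
  set (r := sqrt u) in *. assert (hr : (r * r = u)%R) by (apply sqrt_sqrt; lra).
  assert (hr0 : (0 <= r)%R) by apply sqrt_pos.
  set (s := sqrt 2) in *. assert (hs : (s * s = 2)%R) by (apply sqrt_sqrt; lra).
  assert (hs0 : (0 <= s)%R) by apply sqrt_pos.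
  assert (ha : (IZR a + 1/2 <= u)%R) by nra.
  assert (hm' : (IZR m > 2*u + 4*r*s + 4)%R).
  { replace (2*u + 4*r*s + 4)%R with (2 * (r + s)^2)%R by (simpl; nra). exact hm. }
  set (D := (IZR m - 2 * IZR a - 5)%R).
  assert (hD : (D > 4*r*s)%R) by (unfold D; nra).
  assert (hrs : (0 <= r*s)%R) by nra.
  assert (hD2 : (D * D > 32 * IZR a + 16)%R).
  { assert (D*D > (4*r*s)*(4*r*s))%R by nra.
    assert ((4*r*s)*(4*r*s) = 16 * (r*r) * (s*s))%R by ring. nra. }
  assert (EZ : IZR (m - 2*a - 5) = D).
  { unfold D. rewrite !minus_IZR, mult_IZR. reflexivity. }
  split.
  - apply lt_IZR. rewrite EZ. nra.
  - apply lt_IZR. rewrite (mult_IZR (m-2*a-5)), EZ, mult_IZR, plus_IZR, mult_IZR. nra.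
Qed.

Lemma y0ex : forall q a Bt, 3 <= a -> T a <= q < T (a+1) ->
  exists y0 w k, 0 <= y0 /\ a - 3 <= y0 <= a /\ Bt + y0 = 2*w /\ q - T y0 = 2*k /\ 0 <= k /\ 2*k <= 4*a - 4.
Proof.
  intros q a Bt Ha Hq.
  assert (Hc : exists c w0, a - 1 <= c <= a /\ Bt + c = 2*w0).
  { destruct (Z.Even_or_Odd (a + Bt)) as [[w0 H]|[w0 H]].
    - exists a, w0. lia. - exists (a-1), w0. lia. }
  destruct Hc as [c [w0 [Hc1 Hc2]]].
  assert (Hy : exists y0 w k, a - 3 <= y0 <= a /\ Bt + y0 = 2*w /\ q - T y0 = 2*k).
  { pose proof (T2 c). pose proof (T2 (c-2)).
    assert (T (c-2) = T c - 2*c + 1) by lia.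
    destruct (Z.Even_or_Odd (q - T c)) as [[k H']|[k H']].
    - exists c, w0, k. lia.
    - exists (c-2), (w0-1), (k + c). lia. }
  destruct Hy as [y0 [w [k [Hy1 [Hy2 Hy3]]]]].
  pose proof (T2 a). pose proof (T2 (a+1)). pose proof (T2 (a-3)).
  assert (E1 : T (a+1) = T a + a + 1) by nia.
  assert (E2 : T (a-3) = T a - 3*a + 3) by nia.
  assert (Tle : T y0 <= T a) by (apply T_mono; lia).
  assert (Tge : T (a-3) <= T y0) by (apply T_mono; lia).
  exists y0, w, k. repeat split; lia.
Qed.

Definition TailBound (a Ym : Z) : Prop := forall k, 0 <= k -> 2*k <= 4*a - 4 ->
  exists z1 z2 k2, 0 <= z1 /\ 0 <= z2 /\ 0 <= k2 /\ k = T z1 + 2*(T z2 + 2*k2) /\ z1 + 2*z2 + 4*k2 <= Ym.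

Lemma uniform : forall m n q B a Ym, 4 <= a -> T a <= q < T (a+1) -> TailBound a Ym ->
  a + 2*Ym + 5 <= m -> 4*Ym - 2*a + 11 <= m -> Ym + 3 < m ->
  0 <= B <= m - 3 -> (2 <= n)%nat -> m - 3 <= 2^(Z.of_nat n) ->
  represents m (pow2_coeffs n) ((m-2)*q + B).
Proof.
  intros m n q B a Ym Ha Hq HT C1 C2 C4 HB Hn Hpn.
  destruct (y0ex q a B ltac:(lia) Hq) as [y0 [w [k [Hy0 [Hy1 [Hw [Hk [Hk0 Hk1]]]]]]]].
  destruct (HT k Hk0 Hk1) as [z1 [z2 [k2 [H1 [H2 [H3 [Hkz HY]]]]]]].
  destruct (Z_le_gt_dec (2*(z1 + 2*z2 + 4*k2)) (B + y0)) as [Hge|Hlt].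
  - apply (good_sound m n q B y0 z1 z2 k2 (-y0) w); try lia.
  - assert (Ha' : exists a', a - 1 <= a' <= a /\ T a' <= q - 1 < T (a'+1)).
    { pose proof (T2 a). pose proof (T2 (a-1)).
      destruct (Z_le_gt_dec (T a) (q-1)).
      + exists a. lia.
      + exists (a-1). replace (a-1+1) with a by ring. nia. }
    destruct Ha' as [a' [Ha'1 Ha'2]].
    destruct (y0ex (q-1) a' (B + m - 3) ltac:(lia) Ha'2) as [y1 [w1 [k1 [Hy10 [Hy11 [Hw1 [Hk' [Hk10 Hk11]]]]]]]].
    destruct (HT k1 Hk10 ltac:(lia)) as [u1 [u2 [l2 [G1 [G2 [G3 [Gk GY]]]]]]].
    replace ((m-2)*q + B) with ((m-2)*(q-1) + (B + m - 2)) by ring.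
    apply (good_sound m n (q-1) (B+m-2) y1 u1 u2 l2 (y1+1) (w1 - y1)); try lia.
Qed.

Lemma tail_analytic : forall a, 4 <= a -> TailBound a (4 * Z.sqrt (4*a-4) + 5).
Proof.
  intros a Ha k Hk0 Hk1.
  destruct (zlemma k Hk0) as [z [k1 [Hz0 [Hk10 [Hkz [Hzz Hk1b]]]]]].
  pose proof (Z.div_mod k1 2 ltac:(lia)) as Hd. pose proof (Z.mod_pos_bound k1 2 ltac:(lia)) as Hm.
  assert (Tz2 : T (k1 mod 2) = k1 mod 2). { assert (k1 mod 2 = 0 \/ k1 mod 2 = 1) as [E|E] by lia; rewrite E; reflexivity. }
  assert (0 <= k1/2) by (apply Z.div_pos; lia).
  assert (Hs : z <= Z.sqrt (4*a-4)).
  { destruct (Z.sqrt_spec (4*a-4) ltac:(lia)) as [S1 S2]. set (s := Z.sqrt (4*a-4)) in *.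
    destruct (Z_le_gt_dec z s); [lia|]. assert ((s+1)*(s+1) <= z*z) by nia. lia. }
  exists z, (k1 mod 2), (k1/2). repeat split; try lia.
Qed.

Definition tailf (k:Z) : Z*Z*Z := let '(z1,k1) := gz k in let '(z2,k2) := gz k1 in (z1,z2,k2).
Definition tailY (k:Z) : Z := let '(z1,z2,k2) := tailf k in z1 + 2*z2 + 4*k2.
Definition tailvalid (k:Z) : bool := let '(z1,z2,k2) := tailf k in
  (0 <=? z1) && (0 <=? z2) && (0 <=? k2) && (k =? T z1 + 2*(T z2 + 2*k2)).
Definition condA (a mx : Z) : bool := let M := Mf a in
  (a + 2*mx + 5 <=? M) && (4*mx - 2*a + 11 <=? M) && (mx + 3 <? M).
Fixpoint chk (f:nat) (k mx:Z) : bool := match f with O => true | S f' =>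
  let mx' := Z.max mx (tailY k) in
  tailvalid k && (if Z.even k then (Z.div2 k + 1 <? 24) || condA (Z.div2 k + 1) mx' else true) && chk f' (k+1) mx' end.
Lemma chk_true : chk 560 0 0 = true. Proof. vm_compute. reflexivity. Qed.

Lemma chk_spec : forall f k0 mx0, chk f k0 mx0 = true -> 0 <= k0 ->
  (forall k', 0 <= k' < k0 -> tailvalid k' = true /\ tailY k' <= mx0) ->
  forall a, 24 <= a -> k0 <= 2*a - 2 < k0 + Z.of_nat f ->
  exists mx, condA a mx = true /\ forall k', 0 <= k' <= 2*a - 2 -> tailvalid k' = true /\ tailY k' <= mx.
Proof.
  induction f as [|f IH]; intros k0 mx0 Hc Hk0 Hinv a Ha Hr; cbn [chk] in Hc. simpl Z.of_nat in Hr. lia.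
  rewrite Nat2Z.inj_succ in Hr.
  repeat rewrite andb_true_iff in Hc. destruct Hc as [[Hv Hcond] Hrest].
  set (mx' := Z.max mx0 (tailY k0)) in *.
  assert (Hinv' : forall k', 0 <= k' < k0 + 1 -> tailvalid k' = true /\ tailY k' <= mx').
  { intros k' Hk'. destruct (Z.eq_dec k' k0) as [E|E].
    - subst. split; auto. unfold mx'. lia.
    - destruct (Hinv k' ltac:(lia)) as [A1 A2]. split; auto. unfold mx'. lia. }
  destruct (Z.eq_dec (2*a-2) k0) as [E|E].
  - exists mx'. split.
    + assert (Hev : Z.even k0 = true). { rewrite <- E. replace (2*a-2) with (2*(a-1)) by ring. apply Z.even_mul. }
      rewrite Hev in Hcond. assert (Hd : Z.div2 k0 = a - 1).
      { rewrite Z.div2_div. rewrite <- E. replace (2*a-2) with ((a-1)*2) by ring. apply Z.div_mul. lia. }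
      rewrite Hd in Hcond. replace (a - 1 + 1) with a in Hcond by ring.
      apply orb_true_iff in Hcond. destruct Hcond as [Hc|Hc]; [apply Z.ltb_lt in Hc; lia|exact Hc].
    + intros k' Hk'. apply Hinv'. lia.
  - apply (IH (k0+1) mx' Hrest ltac:(lia) Hinv' a Ha). lia.
Qed.

Lemma tail_table : forall a, 24 <= a < 281 -> exists mx, condA a mx = true /\ TailBound a mx.
Proof.
  intros a Ha.
  assert (Hf : Z.of_nat 560 = 560) by reflexivity.
  destruct (chk_spec 560 0 0 chk_true ltac:(lia) ltac:(intros; lia) a ltac:(lia) ltac:(lia)) as [mx [H1 H2]].
  exists mx. split; auto.
  intros k Hk0 Hk1. destruct (H2 k ltac:(lia)) as [V Y].
  unfold tailvalid, tailY in *. destruct (tailf k) as [[z1 z2] k2].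
  repeat rewrite andb_true_iff in V. destruct V as [[[V1 V2] V3] V4].
  apply Z.leb_le in V1, V2, V3. apply Z.eqb_eq in V4.
  exists z1, z2, k2. repeat split; lia.
Qed.

Theorem lemma3p3 (C : R) (hC : C_property C) (m : Z)
  (hm : (IZR m > 2 * (sqrt (sqrt (2 * C + 1 / 4)) + sqrt 2) ^ 2)%R) :
  universal m (pow2_coeffs (Z.to_nat (Z.log2_up (m - 3)))).
Proof.
  assert (Hm5 : 5 <= m).
  { assert (hs : (sqrt 2 * sqrt 2 = 2)%R) by (apply sqrt_sqrt; lra).
    pose proof (sqrt_pos 2). pose proof (sqrt_pos (sqrt (2 * C + 1 / 4))).
    assert (IZR m > 4)%R by (simpl in hm; nra).
    apply lt_IZR in H1. lia. }
  set (n := Z.to_nat (Z.log2_up (m - 3))).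
  assert (Hpn : m - 3 <= 2^(Z.of_nat n)).
  { unfold n. rewrite Z2Nat.id by (apply Z.log2_up_nonneg). apply Z.log2_up_spec. lia. }
  apply hC; [lia| |].
  { unfold pow2_coeffs. apply Forall_forall. intros x Hx. apply in_map_iff in Hx.
    destruct Hx as [i [Hi _]]. subst x. apply Z.pow_pos_nonneg; lia. }
  intros N HN1 HNC.
  pose proof (Z.div_mod N (m-2) ltac:(lia)) as Hd.
  pose proof (Z.mod_pos_bound N (m-2) ltac:(lia)) as HBb.
  set (q := N / (m-2)) in *. set (B := N mod (m-2)) in *.
  assert (Hq0 : 0 <= q) by (apply Z.div_pos; lia).
  destruct (amaxf_spec q Hq0) as [Ha0 [Ha1 Ha2]]. set (a := amaxf q) in *.
  assert (HTa : (m-2)*T a <= N) by nia.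
  destruct (realH C m a N hm Ha0 Hm5 HTa HNC) as [HD1 HD2].
  assert (HT00 : (m-2) * T 0 <= N) by (vm_compute T; lia).
  destruct (realH C m 0 N hm ltac:(lia) Hm5 HT00 HNC) as [H01 H02].
  assert (Hm10 : 10 <= m) by nia.
  assert (Hn : (2 <= n)%nat).
  { destruct (le_lt_dec 2 n) as [h|h]; auto.
    assert (2^(Z.of_nat n) <= 2^2) by (apply Z.pow_le_mono_r; lia). lia. }
  destruct (Z_le_gt_dec 20 m) as [Hm20|Hm20].
  - rewrite Hd.
    destruct (Z.eq_dec q 0) as [Eq|Eq].
    + rewrite Eq. destruct (Z.Even_or_Odd B) as [[w Hw]|[w Hw]].
      * apply (good_sound m n 0 B 0 0 0 0 (-0) w); try lia; reflexivity.
      * apply (good_sound m n 0 B 0 0 0 0 1 w); try lia; reflexivity.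
    + destruct (Z_lt_le_dec q 300) as [Hq300|Hq300].
      * apply okq_sound; try lia.
        -- apply (allokZ_spec 299 1 allok_true). assert (Z.of_nat 299 = 299) by reflexivity. lia.
        -- fold a. apply Mf_le; lia.
      * assert (Ha24 : 24 <= a).
        { destruct (Z_lt_le_dec a 24); [|lia].
          assert (T (a+1) <= T 24) by (apply T_mono; lia). assert (T 24 = 300) by reflexivity. lia. }
        assert (HMf : Mf a <= m) by (apply Mf_le; lia).
        destruct (Z_lt_le_dec a 281) as [Hsm|Hbig].
        -- destruct (tail_table a ltac:(lia)) as [mx [Hc Htb]].
           unfold condA in Hc. repeat rewrite andb_true_iff in Hc. destruct Hc as [[C1 C2] C4].
           apply Z.leb_le in C1, C2. apply Z.ltb_lt in C4.
           apply (uniform m n q B a mx); try lia. exact Htb.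
        -- pose proof (tail_analytic a ltac:(lia)) as Htb.
           destruct (Z.sqrt_spec (4*a-4) ltac:(lia)) as [S1 S2].
           set (s := Z.sqrt (4*a-4)) in *. assert (0 <= s) by apply Z.sqrt_nonneg.
           assert (Hs8 : 8*s <= a - 9).
           { destruct (Z_le_gt_dec (8*s) (a-9)); [lia|]. assert ((a-9)*(a-9) < 64*(s*s)) by nia. nia. }
           apply (uniform m n q B a (4*s+5)); try lia. exact Htb.
  - assert (Ha2' : a <= 2) by nia.
    assert (T (a+1) <= T 3) by (apply T_mono; lia).
    assert (T 3 = 6) by reflexivity.
    apply small_sound; [lia|nia|].
    fold q. fold a. unfold Hb. apply andb_true_iff. split; [apply Z.ltb_lt|apply Z.ltb_lt]; lia.
Qed.
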